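(* Let $N\in\mathbb{N}$ with $N\ge3$, $1\le m\le N+1$ an integer, and $n\in\mathbb{N}$ with $n>\frac{N+5}{96}$. Then there is a real $E$ with $|E|\le E^{[1]}_N n^{-\frac{N+2}{2}}$ such that \[ \lambda(n)^{-2m}=\frac{3^{m/2}}{\pi^m}\left(\sum_{\ell=0}^{R_N(m)}\binom{-\frac m2}{\ell}24^{-\ell}n^{-\ell-\frac m2}+E\right). \]
   Context: $\lambda(n):=\sqrt{\frac{\pi}{6\sqrt2}\sqrt{24n+1}}$; $R_N(m):=\lfloor\frac{N+1-m}{2}\rfloor$; $E^{[1]}_N:=\max_{1\le m\le N+1}\left|\binom{-m/2}{R_N(m)+1}\right|24^{-R_N(m)-1}$. *)

(* Defs.v *)
From Stdlib Require Import Reals List Arith.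
Open Scope R_scope.

Definition lambda (n : nat) : R :=
  sqrt (PI / (6 * sqrt 2) * sqrt (24 * INR n + 1)).

Fixpoint falling (a : R) (k : nat) : R :=
  match k with
  | O => 1
  | S k' => falling a k' * (a - INR k')
  end.
Definition gbinom (a : R) (k : nat) : R := falling a k / INR (Factorial.fact k).

(* R_N(m) = floor((N+1-m)/2); used only for 1 <= m <= N+1, where N+1-m >= 0,
   so natural-number truncated subtraction and division agree with the floor. *)
Definition RN (N m : nat) : nat := Nat.div (N + 1 - m) 2.

Definition E1bound_term (N m : nat) : R :=
  Rabs (gbinom (- INR m / 2) (S (RN N m))) * / (24 ^ (S (RN N m))).

(* E^{[1]}_N = max_{1 <= m <= N+1} E1bound_term N m  (the list seq 1 (N+1) = [1..N+1]
   is nonempty; all terms are >= 0, so folding Rmax from 0 gives the max) *)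
Definition E1bound (N : nat) : R :=
  fold_right Rmax 0 (map (E1bound_term N) (seq 1 (N + 1))).

(* Main.v *)
Require Import Defs.
From Stdlib Require Import Reals List.
From Coquelicot Require Import Coquelicot.
From Stdlib Require Import Lra Lia.
Open Scope R_scope.

Lemma deriv_pow (a : R) (k : nat) : forall t, -1 < t ->
  is_derive_n (fun u => Rpower (1+u) a) k t (falling a k * Rpower (1+t) (a - INR k)).
Proof.
induction k as [|k IH]; intros t Ht.
- simpl. rewrite Rminus_0_r. ring.
- change (is_derive (Derive_n (fun u => Rpower (1+u) a) k) t (falling a k * (a - INR k) * Rpower (1+t) (a - INR (S k)))). rewrite S_INR.
  apply is_derive_ext_loc with (f := fun u => falling a k * Rpower (1+u) (a - INR k)).
  + apply (open_gt (-1)) in Ht. revert Ht. apply filter_imp. intros u Hu.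
    symmetry. apply is_derive_n_unique. now apply IH.
  + unfold Rpower. auto_derive. lra.
    replace ((a - INR k) * ln (1 + t)) with ((a - (INR k + 1)) * ln (1+t) + ln (1+t)) by ring.
    rewrite exp_plus, exp_ln by lra. field. lra.
Qed.

Lemma ex_deriv_pow (a : R) (k : nat) t : -1 < t ->
  ex_derive_n (fun u => Rpower (1+u) a) k t.
Proof.
intros Ht. destruct k as [|k]. exact I.
eexists. apply (deriv_pow a (S k) t Ht).
Qed.

Lemma Rpower_1_base y : Rpower 1 y = 1.
Proof. unfold Rpower. rewrite ln_1, Rmult_0_r. apply exp_0. Qed.

Lemma taylor_bound (a : R) (K : nat) (X : R) : a <= 0 -> 0 < X ->
  exists r, Rpower (1+X) a = sum_f_R0 (fun l => gbinom a l * X^l) K + r /\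
    Rabs r <= Rabs (gbinom a (S K)) * X^(S K).
Proof.
intros Ha HX.
destruct (Taylor_Lagrange (fun u => Rpower (1+u) a) K 0 X HX) as [z [Hz Heq]].
{ intros t Ht k _. apply ex_deriv_pow. lra. }
exists (X ^ S K / INR (Factorial.fact (S K)) * Derive_n (fun u => Rpower (1 + u) a) (S K) z).
split.
- rewrite Heq, Rminus_0_r. f_equal. apply sum_eq. intros i _.
  rewrite (is_derive_n_unique _ _ _ _ (deriv_pow a i 0 ltac:(lra))).
  rewrite Rplus_0_r, Rpower_1_base. unfold gbinom. field. apply INR_fact_neq_0.
- rewrite (is_derive_n_unique _ _ _ _ (deriv_pow a (S K) z ltac:(lra))).
  unfold gbinom.
  assert (HP : 0 < Rpower (1+z) (a - INR (S K)) <= 1).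
  { split. apply exp_pos. unfold Rpower.
    assert (0 < ln (1+z)) by (rewrite <- ln_1; apply ln_increasing; lra). pose proof (pos_INR K). rewrite S_INR.
    assert (exp ((a - (INR K + 1)) * ln (1 + z)) <= exp 0) by (apply Rlt_le, exp_increasing; nra).
    rewrite exp_0 in H1. exact H1. }
  pose proof (INR_fact_lt_0 (S K)). pose proof (pow_lt X (S K) HX).
  rewrite !Rabs_mult. rewrite (Rabs_pos_eq (X ^ S K / _)) by (apply Rlt_le; apply Rdiv_lt_0_compat; lra).
  rewrite (Rabs_pos_eq (Rpower _ _)) by lra.
  unfold Rdiv. rewrite Rabs_mult, (Rabs_pos_eq (/ INR _)) by (apply Rlt_le, Rinv_0_lt_compat; lra).
  pose proof (Rabs_pos (falling a (S K))). pose proof (Rinv_0_lt_compat _ H).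
  assert (0 <= X ^ S K * / INR (Factorial.fact (S K)) * Rabs (falling a (S K))).
  { apply Rmult_le_pos; [apply Rmult_le_pos|]; lra. }
  nra.
Qed.

Lemma ln_sqrt' x : 0 < x -> ln (sqrt x) = ln x / 2.
Proof. intros Hx. rewrite <- Rpower_sqrt by exact Hx. unfold Rpower. rewrite ln_exp. field. Qed.

Lemma fold_max_ge (f : nat -> R) (l : list nat) x :
  In x l -> f x <= fold_right Rmax 0 (map f l).
Proof.
induction l as [|y l IH]; simpl; intros H. contradiction.
destruct H as [<-|H]. apply Rmax_l. eapply Rle_trans. apply IH, H. apply Rmax_r.
Qed.

Lemma key_id (m n : nat) : (1 <= n)%nat ->
  Rpower (lambda n) (- (2 * INR m)) =
  Rpower 3 (INR m / 2) / PI ^ m *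
  (Rpower (INR n) (- INR m / 2) * Rpower (1 + / (24 * INR n)) (- INR m / 2)).
Proof.
intros Hn. apply le_INR in Hn. simpl INR in Hn.
pose proof PI_RGT_0 as Hpi.
assert (H2 : 0 < sqrt 2) by (apply sqrt_lt_R0; lra).
assert (H24 : 0 < sqrt (24 * INR n + 1)) by (apply sqrt_lt_R0; lra).
assert (HP : 0 < PI / (6 * sqrt 2) * sqrt (24 * INR n + 1)).
{ apply Rmult_lt_0_compat; [apply Rdiv_lt_0_compat|]; lra. }
assert (HX : 0 < / (24 * INR n)) by (apply Rinv_0_lt_compat; lra).
assert (Hpm : 0 < PI ^ m) by (apply pow_lt; lra).
apply ln_inv.
- apply exp_pos.
- apply Rmult_lt_0_compat. apply Rdiv_lt_0_compat. apply exp_pos. lra.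
  apply Rmult_lt_0_compat; apply exp_pos.
- rewrite <- (Rpower_pow m PI) by lra.
  change (Rpower 3 (INR m / 2) / Rpower PI (INR m)) with (Rpower 3 (INR m / 2) * / Rpower PI (INR m)). rewrite ln_mult, ln_mult, ln_mult, ln_Rinv; try apply exp_pos;
    try (apply Rinv_0_lt_compat; apply exp_pos);
    try (apply Rmult_lt_0_compat; apply exp_pos).
  unfold Rpower, lambda. rewrite !ln_exp.
  rewrite ln_sqrt' by lra.
  unfold Rdiv. rewrite !ln_mult, ln_Rinv, ln_mult, ln_sqrt', ln_sqrt'; try lra;
    try (apply Rinv_0_lt_compat; lra); try (apply Rmult_lt_0_compat; lra).
  3: apply Rmult_lt_0_compat; [apply exp_pos| apply Rinv_0_lt_compat, exp_pos].
  2: apply Rmult_lt_0_compat; [lra| apply Rinv_0_lt_compat; lra].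
  replace (1 + / (24 * INR n)) with ((24 * INR n + 1) * / (24 * INR n)) by (field; lra).
  rewrite ln_mult, ln_Rinv, ln_mult; try lra; try (apply Rmult_lt_0_compat; lra); try (apply Rinv_0_lt_compat; lra).
  replace 24 with (2*2*2*3) by ring. replace 6 with (2*3) by ring.
  rewrite !ln_mult; try lra.
Qed.


Theorem lemma3p15 (N m n : nat) :
  (3 <= N)%nat -> (1 <= m <= N + 1)%nat ->
  INR n > (INR N + 5) / 96 ->
  exists E : R,
    Rabs E <= E1bound N * Rpower (INR n) (- (INR N + 2) / 2) /\
    Rpower (lambda n) (- (2 * INR m)) =
      Rpower 3 (INR m / 2) / PI ^ m *
      (sum_f_R0 (fun l => gbinom (- INR m / 2) l * / (24 ^ l) *
                          Rpower (INR n) (- INR l - INR m / 2)) (RN N m)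
       + E).
Proof.
intros HN Hm Hn.
assert (Hn1 : (1 <= n)%nat).
{ destruct n. simpl in Hn. pose proof (pos_INR N). lra. lia. }
pose proof (le_INR _ _ Hn1) as HnR. simpl INR in HnR.
set (a := - INR m / 2).
set (X := / (24 * INR n)).
set (K := RN N m).
assert (Ha : a <= 0) by (unfold a; pose proof (pos_INR m); lra).
assert (HX : 0 < X) by (unfold X; apply Rinv_0_lt_compat; lra).
destruct (taylor_bound a K X Ha HX) as [r [Hr Hrb]].
exists (Rpower (INR n) a * r).
assert (Hpa : 0 < Rpower (INR n) a) by apply exp_pos.
split.
- assert (HK : (N <= 2 * K + m)%nat).
  { unfold K, RN. pose proof (Nat.div_mod (N+1-m) 2). pose proof (Nat.mod_upper_bound (N+1-m) 2). lia. }
  apply le_INR in HK. rewrite plus_INR, mult_INR in HK. simpl (INR 2) in HK.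
  assert (HT : E1bound_term N m <= E1bound N).
  { unfold E1bound. apply fold_max_ge. apply in_seq. lia. }
  assert (HT0 : 0 <= E1bound_term N m).
  { unfold E1bound_term. apply Rmult_le_pos. apply Rabs_pos. apply Rlt_le, Rinv_0_lt_compat, pow_lt; lra. }
  assert (HXp : X ^ S K = / 24 ^ S K * Rpower (INR n) (- INR (S K))).
  { unfold X. rewrite Rpower_Ropp, Rpower_pow by lra. rewrite pow_inv, Rpow_mult_distr.
    field. split; apply pow_nonzero; lra. }
  rewrite Rabs_mult, (Rabs_pos_eq (Rpower _ _)) by lra.
  apply Rle_trans with (Rpower (INR n) a * (E1bound_term N m * Rpower (INR n) (- INR (S K)))).
  { apply Rmult_le_compat_l. lra. unfold E1bound_term. fold a K. rewrite HXp in Hrb. lra. }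
  rewrite <- Rmult_assoc, (Rmult_comm (Rpower _ a)), Rmult_assoc, <- Rpower_plus.
  assert (Hle : Rpower (INR n) (a + - INR (S K)) <= Rpower (INR n) (- (INR N + 2) / 2)).
  { apply Rle_Rpower. lra. unfold a. rewrite S_INR. lra. }
  assert (0 <= Rpower (INR n) (a + - INR (S K))) by (apply Rlt_le, exp_pos).
  apply Rmult_le_compat; lra.
- rewrite key_id by exact Hn1. fold a X. rewrite Hr.
  assert (Hs : sum_f_R0 (fun l => gbinom a l * / 24 ^ l * Rpower (INR n) (- INR l - INR m / 2)) K
     = Rpower (INR n) a * sum_f_R0 (fun l => gbinom a l * X ^ l) K).
  { rewrite scal_sum. apply sum_eq. intros i _.
    replace (- INR i - INR m / 2) with (a + - INR i) by (unfold a; field).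
    rewrite Rpower_plus, Rpower_Ropp, Rpower_pow by lra.
    unfold X. rewrite pow_inv, Rpow_mult_distr. field.
    split; apply pow_nonzero; lra. }
  rewrite Hs. ring.
Qed.
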